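(* Let $G=(V,E)$ be a graph and let $S$ be an optimal edge-irregulator of $G$. Then for every edge $e\in S$ there exists an edge $uv\in E$ with $d_G(u)=d_G(v)$ such that $e$ is at distance at most $2|S|-1$ from $uv$.
   Context: All graphs are finite and simple; $d_G(x)$ is the degree of $x$ in $G$. A graph is locally irregular if no two adjacent vertices have the same degree. An edge-irregulator of $G$ is a set $S\subseteq E(G)$ such that $G-S$ is locally irregular; it is optimal if it has minimum cardinality among all edge-irregulators of $G$. The distance between two edges is the minimum distance in $G$ between an endpoint of one and an endpoint of the other. *)

(* Defs.v *)
(* A finite simple graph on vertex type T is given by its
   edge set E : {set {set T}}, every edge being a 2-element vertex set. *)
From mathcomp Require Import all_boot.
Set Implicit Arguments. Unset Strict Implicit. Unset Printing Implicit Defensive.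

Section Graphs.
Variable T : finType.

Definition simple_graph (E : {set {set T}}) : Prop :=
  forall e, e \in E -> #|e| = 2.

Definition deg (E : {set {set T}}) (x : T) : nat := #|[set e in E | x \in e]|.

Definition adj (E : {set {set T}}) : rel T :=
  fun x y => (x != y) && ([set x; y] \in E).

Definition locally_irregular (E : {set {set T}}) : Prop :=
  forall u v, adj E u v -> deg E u != deg E v.

Definition edge_irregulator (E S : {set {set T}}) : Prop :=
  S \subset E /\ locally_irregular (E :\: S).

Definition optimal_edge_irregulator (E S : {set {set T}}) : Prop :=
  edge_irregulator E S /\ forall S', edge_irregulator E S' -> #|S| <= #|S'|.

Definition dist_le (E : {set {set T}}) (k : nat) (x y : T) : Prop :=
  exists p : seq T, [&& path (adj E) x p, last x p == y & size p <= k].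

Definition edge_dist_le (E : {set {set T}}) (k : nat) (e f : {set T}) : Prop :=
  exists x y, [/\ x \in e, y \in f & dist_le E k x y].

End Graphs.

(* Main.v *)
Require Import Defs.
From mathcomp Require Import all_boot.
From Stdlib Require ClassicalEpsilon.
From mathcomp Require Import zify.
Set Implicit Arguments. Unset Strict Implicit. Unset Printing Implicit Defensive.

Definition pb (P : Prop) : bool := if ClassicalEpsilon.excluded_middle_informative P then true else false.
Lemma pbP P : reflect P (pb P).
Proof. by rewrite /pb; case: ClassicalEpsilon.excluded_middle_informative => h; constructor. Qed.

Definition DD (T : finType) (E S : {set {set T}}) (e : {set T}) (j : nat) :=
  [set f in S | pb (edge_dist_le E j e f)].

Lemma dist_le_mono (T : finType) (E : {set {set T}}) m n x y :
  m <= n -> dist_le E m x y -> dist_le E n x y.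
Proof.
move=> mn [p /and3P [h1 h2 h3]]; exists p; rewrite h1 h2 /=.
exact: leq_trans h3 mn.
Qed.

Lemma dist_le_step (T : finType) (E : {set {set T}}) n x a b :
  dist_le E n x a -> adj E a b -> dist_le E n.+1 x b.
Proof.
move=> [p /and3P [h1 /eqP h2 h3]] hab; exists (rcons p b).
by rewrite rcons_path h1 h2 hab last_rcons eqxx size_rcons ltnS h3.
Qed.

Lemma dist_le0 (T : finType) (E : {set {set T}}) x : dist_le E 0 x x.
Proof. by exists [::]; rewrite /= eqxx. Qed.

Lemma DD_mono (T : finType) (E S : {set {set T}}) (e : {set T}) m n :
  m <= n -> DD E S e m \subset DD E S e n.
Proof.
move=> mn; apply/subsetP => f; rewrite !inE => /andP [-> /pbP [x [y [hx hy hd]]]].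
apply/pbP; exists x, y; split => //; exact: dist_le_mono hd.
Qed.

Lemma inDD (T : finType) (E S : {set {set T}}) (e : {set T}) j f x y :
  f \in S -> x \in e -> y \in f -> dist_le E j x y -> f \in DD E S e j.
Proof. by move=> fS xe yf d; rewrite inE fS; apply/pbP; exists x, y. Qed.

Lemma DD_vertex (T : finType) (E S : {set {set T}}) (e : {set T}) j f a :
  simple_graph E -> S \subset E -> f \in DD E S e j -> a \in f ->
  exists2 x, x \in e & dist_le E j.+1 x a.
Proof.
move=> sg SE; rewrite inE => /andP [fS /pbP [x [y [hx hy hd]]]] af.
exists x => //.
case: (eqVneq y a) => [<-|ya]; first exact: dist_le_mono hd.
apply: dist_le_step hd _; rewrite /adj ya /=.
have fE : f \in E by apply: (subsetP SE).
have -> : [set y; a] = f.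
  apply/eqP; rewrite eqEcard; apply/andP; split.
    by apply/subsetP => z; rewrite !inE => /orP [] /eqP ->.
  by rewrite (sg _ fE) cards2 ya.
by [].
Qed.

Lemma deg_full (T : finType) (E S' : {set {set T}}) u :
  (forall g, g \in S' -> u \notin g) -> deg (E :\: S') u = deg E u.
Proof.
move=> h; rewrite /deg; apply: eq_card => g; rewrite !inE.
case ug: (u \in g); rewrite ?andbF ?andbT //.
case gS: (g \in S'); last by [].
by move: (h g gS); rewrite ug.
Qed.

Lemma deg_mid (T : finType) (E S X : {set {set T}}) u :
  (forall g, g \in X -> u \notin g) -> deg (E :\: (S :\: X)) u = deg (E :\: S) u.
Proof.
move=> h; rewrite /deg; apply: eq_card => g; rewrite !inE.
case ug: (u \in g); rewrite ?andbF ?andbT //.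
case gX: (g \in X); last by [].
by move: (h g gX); rewrite ug.
Qed.

Lemma arith k s : k < s -> (2 * k).+1 <= 2 * s - 1.
Proof. lia. Qed.

Lemma adj_sym (T : finType) (E : {set {set T}}) u v : adj E u v = adj E v u.
Proof. by rewrite /adj eq_sym setUC. Qed.

Theorem lemma1 (T : finType) (E S : {set {set T}}) :
  simple_graph E ->
  optimal_edge_irregulator E S ->
  forall e, e \in S ->
    exists u v : T,
      [/\ u != v, [set u; v] \in E, deg E u = deg E v &
          edge_dist_le E (2 * #|S| - 1) e [set u; v]].
Proof.
move=> sg [[SE liS] opt] e eS.
have eE : e \in E by apply: (subsetP SE).
have [x0 x0e] : exists x, x \in e.
  by apply/set0Pn; rewrite -card_gt0 (sg _ eE).
have eD0 : e \in DD E S e 0 by apply: (inDD eS x0e x0e (dist_le0 E x0)).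
have [k kS stab] : exists2 k, k < #|S| & DD E S e (2 * k).+2 \subset DD E S e (2 * k).
  case: (boolP [exists k : 'I_#|S|, DD E S e (2 * k).+2 \subset DD E S e (2 * k)]).
    by move=> /existsP [k hk]; exists k.
  rewrite negb_exists => /forallP hall.
  have grow : forall n, n <= #|S| -> n < #|DD E S e (2 * n)|.
    elim => [|n IH] hn; first by rewrite card_gt0; apply/set0Pn; exists e.
    have hn' : n < #|S| by [].
    have := hall (Ordinal hn'); rewrite /= => hns.
    have sub : DD E S e (2 * n) \subset DD E S e (2 * n).+2 by apply: DD_mono; lia.
    have pr : DD E S e (2 * n) \proper DD E S e (2 * n).+2 by rewrite properE sub.
    have := proper_card pr; rewrite mulnS add2n.
    by move=> h; exact: leq_ltn_trans (IH (ltnW hn)) h.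
  have := grow #|S| (leqnn _).
  have : DD E S e (2 * #|S|) \subset S by apply/subsetP => f; rewrite inE => /andP [].
  by move=> /subset_leq_card h1 h2; have := leq_trans h2 h1; rewrite ltnn.
set X := DD E S e (2 * k).
have XS : X \subset S by apply/subsetP => f; rewrite inE => /andP [].
have eX : e \in X by apply: (subsetP (DD_mono _ _ _ (leq0n _))).
have clos : forall v g, g \in S -> v \in g ->
    (exists2 x, x \in e & dist_le E (2 * k).+2 x v) -> g \in X.
  move=> v g gS vg [x xe d]; apply: (subsetP stab); exact: inDD gS xe vg d.
set S' := S :\: X.
have S'E : S' \subset E by apply: subset_trans (subsetDl _ _) SE.
have S'lt : #|S'| < #|S|.
  apply: proper_card; rewrite properE subsetDl /=.
  by apply/subsetPn; exists e => //; rewrite inE eX.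
have [u [v [huv hdeg]]] : exists u v, adj (E :\: S') u v /\ deg (E :\: S') u = deg (E :\: S') v.
  case: (boolP [exists u, exists v, adj (E :\: S') u v && (deg (E :\: S') u == deg (E :\: S') v)]).
    by move=> /existsP [u /existsP [v /andP [h1 /eqP h2]]]; exists u, v.
  rewrite negb_exists => /forallP h.
  have li : locally_irregular (E :\: S').
    move=> u v huv; move: (h u); rewrite negb_exists => /forallP /(_ v).
    by rewrite huv.
  by have := opt S' (conj S'E li); rewrite leqNgt S'lt.
have core : forall u v, adj (E :\: S') u v -> deg (E :\: S') u = deg (E :\: S') v ->
    forall f, f \in X -> u \in f ->
    [/\ u != v, [set u; v] \in E, deg E u = deg E v &
          edge_dist_le E (2 * #|S| - 1) e [set u; v]].
  move=> u1 v1 ha hd f fX uf.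
  have [x xe dx] := DD_vertex sg SE fX uf.
  move: (ha); rewrite /adj => /andP [nuv]; rewrite inE => /andP [_ uvE].
  have aE : adj E u1 v1 by rewrite /adj nuv uvE.
  have hu : forall g, g \in S' -> u1 \notin g.
    move=> g; rewrite inE => /andP [gX gS]; apply/negP => ug.
    by move: gX; rewrite (clos u1 g gS ug) //; exists x => //; apply: dist_le_mono dx.
  have hv : forall g, g \in S' -> v1 \notin g.
    move=> g; rewrite inE => /andP [gX gS]; apply/negP => vg.
    by move: gX; rewrite (clos v1 g gS vg) //; exists x => //; apply: dist_le_step dx aE.
  split => //.
    by rewrite -(deg_full E hu) -(deg_full E hv).
  exists x, u1; split; [done | by rewrite !inE eqxx | ].
  exact: dist_le_mono (arith kS) dx.
case: (boolP [exists f in X, u \in f]) => [/existsP [f /andP [fX uf]]|nu].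
  by exists u, v; apply: core fX uf.
case: (boolP [exists f in X, v \in f]) => [/existsP [f /andP [fX vf]]|nv].
  exists v, u; apply: (core v u _ _ f) => //; by rewrite adj_sym.
exfalso.
have hu : forall g, g \in X -> u \notin g.
  by move=> g gX; apply/negP => ug; move/existsP: nu; apply; exists g; rewrite gX.
have hv : forall g, g \in X -> v \notin g.
  by move=> g gX; apply/negP => vg; move/existsP: nv; apply; exists g; rewrite gX.
have aS : adj (E :\: S) u v.
  move: huv; rewrite /adj => /andP [-> ]; rewrite [_ \in E :\: S']in_setD => /andP [h1 h2]; rewrite in_setD h2 andbT /=.
  apply/negP => uvS; move: h1; rewrite /S' in_setD uvS andbT negbK => uvX.
  by move: (hu _ uvX); rewrite !inE eqxx.
by move: (liS u v aS); rewrite -(deg_mid _ _ hu) -(deg_mid _ _ hv) hdeg eqxx.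
Qed.
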